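(* Let $\mathcal{A}=\{A_1,\dots,A_m\}$ be a bimodal collection of pairwise disjoint nonempty subsets of a finite abelian group $G$, with internal difference groups $H_1,\dots,H_m$, and suppose there are at least two indices $i$ with $|A_i|<|H_i|$. Then for any two distinct indices $i\neq j$ with $|A_i|<|H_i|$ and $|A_j|<|H_j|$, $H_i$ is not a subgroup of $H_j$ and $H_j$ is not a subgroup of $H_i$.
   Context: $G$ is written additively. The internal difference group $H_i$ of $A_i$ is the subgroup generated by all $x-y$ with $x,y\in A_i$; one always has $|A_i|\le|H_i|$. A collection $\{A_1,\dots,A_m\}$ of pairwise disjoint subsets of $G$ is bimodal if for every $i$ and every $\delta\in G\setminus\{0\}$, the number $N_i(\delta)$ of pairs $(a,b)$ with $a\in A_i$, $b\in A_j$ for some $j\neq i$, and $a-b=\delta$, satisfies $N_i(\delta)\in\{0,|A_i|\}$. *)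

(* Defs.v *)
From mathcomp Require Import all_boot all_order all_algebra.
Set Implicit Arguments. Unset Strict Implicit. Unset Printing Implicit Defensive.
Import GRing.Theory.
Local Open Scope ring_scope.

Definition is_subgroup (G : finZmodType) (S : {set G}) : bool :=
  (0 \in S) && [forall x in S, forall y in S, x - y \in S].

Definition gen_subgroup (G : finZmodType) (X : {set G}) : {set G} :=
  \bigcap_(S : {set G} | is_subgroup S && (X \subset S)) S.

Definition diff_set (G : finZmodType) (A : {set G}) : {set G} :=
  [set d | [exists x in A, exists y in A, d == x - y]].

Definition int_diff_group (G : finZmodType) (A : {set G}) : {set G} :=
  gen_subgroup (diff_set A).

Definition Ncount (G : finZmodType) (m : nat) (A : 'I_m -> {set G}) (i : 'I_m)
  (delta : G) : nat :=
  #|[set p : G * G | [&& p.1 \in A i,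
       [exists j : 'I_m, (j != i) && (p.2 \in A j)] & p.1 - p.2 == delta]]|.

Definition pairwise_disjoint (G : finZmodType) (m : nat) (A : 'I_m -> {set G}) : Prop :=
  forall i j : 'I_m, i != j -> [disjoint A i & A j].

Definition bimodal (G : finZmodType) (m : nat) (A : 'I_m -> {set G}) : Prop :=
  pairwise_disjoint A /\
  forall (i : 'I_m) (delta : G), delta != 0 ->
    Ncount A i delta = 0%N \/ Ncount A i delta = #|A i|.

(* Main.v *)
Require Import Defs.
From mathcomp Require Import all_boot all_order all_algebra.
Import GRing.Theory.
Set Implicit Arguments. Unset Strict Implicit.
Local Open Scope ring_scope.

Definition Bs (G : finZmodType) (m : nat) (A : 'I_m -> {set G}) (i : 'I_m) : {set G} :=
  [set x | [exists j : 'I_m, (j != i) && (x \in A j)]].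

Lemma step (G : finZmodType) (m : nat) (A : 'I_m -> {set G}) i a a' b :
  bimodal A -> a \in A i -> a' \in A i -> b \in Bs A i -> b + (a' - a) \in Bs A i.
Proof.
move=> [dis bim] Ha Ha' Hb; apply/negPn/negP => Hn.
have Hd : a - b != 0.
  rewrite subr_eq0; apply/eqP => E.
  move: Hb; rewrite inE => /existsP [k /andP [kne bk]].
  by move: (disjointFr (dis _ _ kne) bk); rewrite -E Ha.
have Hab : (a, b) \in [set p : G * G | [&& p.1 \in A i,
       [exists j : 'I_m, (j != i) && (p.2 \in A j)] & p.1 - p.2 == a - b]].
  by rewrite inE /= Ha eqxx andbT; move: Hb; rewrite inE.
case: (bim i (a - b) Hd); rewrite /Ncount => E.
  by move/eqP: E; rewrite cards_eq0 => /eqP P0; rewrite P0 in_set0 in Hab.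
set P := (X in #|X|) in E.
have : leq #|P| #|A i :\ a'|.
  apply: leq_trans (leq_imset_card (fun x => (x, x - (a - b))) _).
  apply: subset_leq_card; apply/subsetP => -[p1 p2].
  rewrite /P inE /= => /and3P [H1 H2 /eqP H3].
  have Ep2 : p2 = p1 - (a - b) by rewrite -H3 opprB addrC addrNK.
  apply/imsetP; exists p1; last by rewrite Ep2.
  rewrite !inE H1 andbT; apply/eqP => E1.
  apply: (negP Hn).
  suff -> : b + (a' - a) = p2 by rewrite inE.
  by rewrite Ep2 E1 opprB addrCA.
by rewrite E (cardsD1 a') Ha' ltnn.
Qed.

Lemma gen_min (G : finZmodType) (X S : {set G}) :
  is_subgroup S -> X \subset S -> gen_subgroup X \subset S.
Proof.
move=> sS XS; apply/subsetP => x /bigcapP; apply; by rewrite sS XS.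
Qed.

Lemma Bs_inv (G : finZmodType) (m : nat) (A : 'I_m -> {set G}) i h :
  bimodal A -> h \in int_diff_group (A i) ->
  forall b, (b \in Bs A i) = (b + h \in Bs A i).
Proof.
move=> bA Hh.
pose S := [set h | [forall b, (b \in Bs A i) == (b + h \in Bs A i)]].
suff : h \in S by rewrite inE => /forallP H b; apply/eqP; apply: H.
apply: (subsetP (gen_min _ _)) Hh.
  rewrite /is_subgroup; apply/andP; split.
    by rewrite inE; apply/forallP => b; rewrite addr0.
  apply/forallP => x; apply/implyP; rewrite inE => /forallP Sx.
  apply/forallP => y; apply/implyP; rewrite inE => /forallP Sy.
  rewrite inE; apply/forallP => b.
  rewrite (eqP (Sx b)) (eqP (Sy (b + (x - y)))).
  by rewrite addrA subrK.
apply/subsetP => d; rewrite inE => /existsP [x /andP [Hx /existsP [y /andP [Hy /eqP ->]]]].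
rewrite inE; apply/forallP => b; apply/eqP; apply/idP/idP => Hb.
  exact: step.
have := step bA Hx Hy Hb.
by rewrite -addrA subrKA subrr addr0.
Qed.

Lemma notsub (G : finZmodType) (m : nat) (A : 'I_m -> {set G}) i j :
  bimodal A -> A i != set0 -> i != j ->
  (#|A i| < #|int_diff_group (A i)|)%N ->
  ~~ (int_diff_group (A i) \subset int_diff_group (A j)).
Proof.
move=> bA ne ij lt; apply/negP => sub.
have [ai Hai] := set0Pn _ ne.
have : ~~ ((fun h => ai + h) @: int_diff_group (A i) \subset A i).
  apply/negP => /subset_leq_card; rewrite card_imset; last exact: addrI.
  by rewrite leqNgt lt.
case/subsetPn => x /imsetP [h Hh ->] Hn.
have aiBj : ai \in Bs A j.
  by rewrite inE; apply/existsP; exists i; rewrite ij Hai.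
have : ai + h \in Bs A j by rewrite -(Bs_inv bA (subsetP sub _ Hh)).
rewrite inE => /existsP [k /andP [kj xk]].
have ki : k != i.
  by apply/eqP => E; move: xk; rewrite E => xk; rewrite xk in Hn.
have : ai \in Bs A i.
  by rewrite (Bs_inv bA Hh) inE; apply/existsP; exists k; rewrite ki xk.
rewrite inE => /existsP [k' /andP [k'i aik']].
by move: (disjointFr (bA.1 _ _ k'i) aik'); rewrite Hai.
Qed.

Theorem lemma3p3 (G : finZmodType) (m : nat) (A : 'I_m -> {set G}) :
  bimodal A ->
  (forall i : 'I_m, A i != set0) ->
  (exists i1 i2 : 'I_m, [/\ i1 != i2,
     (#|A i1| < #|int_diff_group (A i1)|)%N &
     (#|A i2| < #|int_diff_group (A i2)|)%N]) ->
  forall i j : 'I_m, i != j ->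
    (#|A i| < #|int_diff_group (A i)|)%N ->
    (#|A j| < #|int_diff_group (A j)|)%N ->
    ~~ (int_diff_group (A i) \subset int_diff_group (A j)) /\
    ~~ (int_diff_group (A j) \subset int_diff_group (A i)).
Proof.
move=> bA ne _ i j ij lti ltj; split; first exact: notsub.
by apply: notsub => //; rewrite eq_sym.
Qed.
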